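(* For every $t\in(0,1)$, $$\lim_{n \to \infty} \sum_{k \ge 0} B^{n-k}_k(t;1) = 2^{-t}.$$
   Context: For $h\ge 0$, the $h$-Bernstein polynomials are $$B^m_k(t;h) = \binom{m}{k}\frac{\prod_{i=0}^{k-1}(t+ih)\prod_{i=0}^{m-k-1}(1-t+ih)}{\prod_{i=0}^{m-1}(1+ih)}$$ for integers $0\le k\le m$ (empty products equal $1$), and $B^m_k(t;h)=0$ for $m<k$. Here $h=1$. *)

(* Defs.v *)
From HB Require Import structures.
From mathcomp Require Import all_boot all_order all_algebra.
From mathcomp Require Import all_classical all_reals all_analysis.
Set Implicit Arguments. Unset Strict Implicit. Unset Printing Implicit Defensive.
Import Order.TTheory GRing.Theory Num.Theory.
Local Open Scope ring_scope.

Definition hBernstein (R : realType) (h : R) (m k : nat) (t : R) : R :=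
  if (k <= m)%N then
    'C(m, k)%:R * (\prod_(i < k) (t + i%:R * h))
      * (\prod_(i < m - k) (1 - t + i%:R * h))
      / (\prod_(i < m) (1 + i%:R * h))
  else 0.

(* Main.v *)
Require Import Defs.
From HB Require Import structures.
From mathcomp Require Import all_boot all_order all_algebra.
From mathcomp Require Import all_classical all_reals all_analysis.
From mathcomp Require Import ring lra zify.
Import Order.TTheory GRing.Theory Num.Theory.
Set Implicit Arguments. Unset Strict Implicit.
Local Open Scope classical_set_scope.
Local Open Scope ring_scope.

Definition pa (R : realType) (x : R) (k : nat) : R :=
  (\prod_(i < k) (x + i%:R)) / k`!%:R.

Definition wt (R : realType) (t : R) (n k : nat) : R :=
  if (k.*2 <= n)%N then pa t k * pa (1 - t) (n - k.*2) else 0.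

Lemma fact_neq0 (R : realType) k : (k`!%:R : R) != 0.
Proof. by rewrite pnatr_eq0 -lt0n fact_gt0. Qed.

Lemma paS (R : realType) (x : R) j :
  pa x j.+1 * j.+1%:R = (x + j%:R) * pa x j.
Proof.
rewrite /pa big_ord_recr /= factS natrM.
have h1 := fact_neq0 R j.
have h2 : (j.+1%:R : R) != 0 by rewrite pnatr_eq0.
field. by rewrite h1 addrC natr1 h2.
Qed.

Lemma pa0 (R : realType) (x : R) : pa x 0 = 1.
Proof. by rewrite /pa big_ord0 fact0 divr1. Qed.

Lemma prod_fact (R : realType) m :
  \prod_(i < m) (1 + i%:R * 1) = (m`!%:R : R).
Proof.
elim: m => [|m IH]; first by rewrite big_ord0 fact0.
by rewrite big_ord_recr /= IH factS natrM mulr1 mulrC -natr1 addrC.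
Qed.

Lemma hB_wt (R : realType) (t : R) n k : (k <= n)%N ->
  hBernstein 1 (n - k) k t = wt t n k.
Proof.
move=> kn; rewrite /hBernstein /wt.
have -> : (k <= n - k)%N = (k.*2 <= n)%N by lia.
case: ifP => // h.
have -> : (n - k - k = n - k.*2)%N by lia.
under eq_bigr do rewrite mulr1.
under [X in _ * X / _]eq_bigr do rewrite mulr1.
rewrite prod_fact /pa.
have kk : (k <= n - k)%N by lia.
have := bin_fact kk.
have -> : (n - k - k = n - k.*2)%N by lia.
move=> hf.
have e : ('C(n - k, k)%:R : R) = (n-k)`!%:R / (k`!%:R * (n - k.*2)`!%:R).
  rewrite -hf natrM natrM. field.
  by rewrite !fact_neq0.
rewrite e. field. by rewrite !fact_neq0.
Qed.
Definition Us (R : realType) (t : R) (n : nat) : R := \sum_(k < n.+1) wt t n k.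
Definition cc (R : realType) (t : R) (j : nat) : R := (-1) ^+ j * pa t j.
Definition Ts (R : realType) (t : R) (n : nat) : R := \sum_(j < n.+1) cc t j.

Lemma wt0 (R : realType) (t : R) n k : (n < k.*2)%N -> wt t n k = 0.
Proof. by rewrite /wt ltnNge => /negbTE ->. Qed.

Lemma sum_ext0 (R : realType) (f : nat -> R) K N :
  (forall k, (K <= k)%N -> f k = 0) -> (K <= N)%N ->
  \sum_(k < N) f k = \sum_(k < K) f k.
Proof.
move=> f0; elim: N => [|N IH]; first by rewrite leqn0 => /eqP ->.
rewrite leq_eqVlt => /orP[/eqP -> //|]; rewrite ltnS => KN.
by rewrite big_ord_recr /= f0 // addr0 IH.
Qed.

Lemma Us_big (R : realType) (t : R) n N : (n < N)%N ->
  Us t n = \sum_(k < N) wt t n k.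
Proof.
move=> nN; rewrite /Us (@sum_ext0 _ _ n.+1 N) // => k kn.
by apply: wt0; lia.
Qed.

Lemma termI (R : realType) (t : R) n k :
  (n.+2%:R - 2 * k%:R) * wt t n.+2 k =
  (1 - t) * wt t n.+1 k + (n.+1%:R - 2 * k%:R - t) * wt t n k.
Proof.
case: (leqP (k.*2) n) => h.
  have [j ->] : exists j, n = (k.*2 + j)%N by exists (n - k.*2)%N; lia.
  rewrite /wt !ifT; try lia.
  have -> : ((k.*2 + j).+2 - k.*2 = j.+2)%N by lia.
  have -> : ((k.*2 + j).+1 - k.*2 = j.+1)%N by lia.
  have -> : ((k.*2 + j) - k.*2 = j)%N by lia.
  have e1 := paS (1 - t) j.+1.
  have e2 := paS (1 - t) j.
  have q1 : ((k.*2 + j).+2%:R : R) = 2 * k%:R + j%:R + 2.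
    by rewrite -addn2 !natrD -mul2n natrM.
  have q2 : ((k.*2 + j).+1%:R : R) = 2 * k%:R + j%:R + 1.
    by rewrite -addn1 !natrD -mul2n natrM.
  have q3 : (j.+2%:R : R) = j%:R + 2 by rewrite -addn2 natrD.
  have q4 : (j.+1%:R : R) = j%:R + 1 by rewrite -addn1 natrD.
  rewrite q1 q2; rewrite q3 q4 in e1; rewrite q4 in e2.
  set A := pa (1-t) j.+2 in e1 *; set B := pa (1-t) j.+1 in e1 e2 *;
    set C := pa (1 - t) j in e2 *; set P := pa t k.
  transitivity (P * (A * (j%:R + 2))); first ring.
  rewrite e1; transitivity ((1 - t) * (P * B) + P * (B * (j%:R + 1))); first ring.
  rewrite e2; ring.
case: (leqP (k.*2) n.+1) => h2.
  have e : k.*2 = n.+1 by lia.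
  rewrite (wt0 t h) /wt ifT ?ifT; try lia.
  have -> : (n.+2 - k.*2 = 1)%N by lia.
  have -> : (n.+1 - k.*2 = 0)%N by lia.
  have e1 := paS (1 - t) 0.
  rewrite pa0 in e1. rewrite pa0.
  have -> : (n.+2%:R - 2 * k%:R : R) = 1.
    rewrite -natrM mul2n e -addn1 natrD; ring.
  move: e1; rewrite !mulr1 addr0 => e1; rewrite e1; ring.
rewrite (wt0 _ h2) (wt0 _ (ltnW h2)).
case: (leqP (k.*2) n.+2) => h3.
  have e : k.*2 = n.+2 by lia.
  have -> : (n.+2%:R - 2 * k%:R : R) = 0 by rewrite -natrM mul2n e subrr.
  ring.
rewrite wt0 //; ring.
Qed.

Lemma termII (R : realType) (t : R) n k :
  2 * k.+1%:R * wt t n.+2 k.+1 = 2 * (t + k%:R) * wt t n k.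
Proof.
rewrite /wt; have -> : (k.+1.*2 <= n.+2)%N = (k.*2 <= n)%N by lia.
case: ifP => h; last by rewrite !mulr0.
have -> : (n.+2 - k.+1.*2 = n - k.*2)%N by lia.
have e := paS t k.
transitivity (2 * (pa t k.+1 * k.+1%:R) * pa (1 - t) (n - k.*2)); first ring.
rewrite e; ring.
Qed.

Lemma Us_rec (R : realType) (t : R) n :
  n.+2%:R * Us t n.+2 = (1 - t) * Us t n.+1 + (n.+1%:R + t) * Us t n.
Proof.
rewrite (@Us_big _ t n.+1 n.+3) // /Us mulr_sumr.
have z : forall (g : nat -> R) k, (n.+1 <= k)%N -> g k * wt t n k = 0.
  by move=> g k kn; rewrite wt0 ?mulr0 //; lia.
transitivity (\sum_(k < n.+3) ((n.+2%:R - 2 * k%:R) * wt t n.+2 k)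
              + \sum_(k < n.+3) (2 * k%:R * wt t n.+2 k)).
  rewrite -big_split /=; apply: eq_bigr => k _; ring.
rewrite [X in _ + X = _]big_ord_recl /= mulr0 mul0r add0r.
under eq_bigr do rewrite termI.
under [X in _ + X = _]eq_bigr => k _ do rewrite /bump /= add1n termII.
rewrite big_split /= -mulr_sumr.
rewrite (@sum_ext0 _ (fun k => (n.+1%:R - 2 * k%:R - t) * wt t n k) n.+1 n.+3);
  [| move=> k kn /=; rewrite wt0 ?mulr0 //; lia | lia].
rewrite (@sum_ext0 _ (fun k => 2 * (t + k%:R) * wt t n k) n.+1 n.+2);
  [| move=> k kn /=; rewrite wt0 ?mulr0 //; lia | lia].
rewrite -addrA -big_split /= mulr_sumr; congr (_ + _).
rewrite mulr_sumr; apply: eq_bigr => k _; ring.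
Qed.

Lemma Ts_rec (R : realType) (t : R) n :
  n.+2%:R * Ts t n.+2 = (1 - t) * Ts t n.+1 + (n.+1%:R + t) * Ts t n.
Proof.
rewrite /Ts big_ord_recr /= big_ord_recr /=.
set S := \sum_(i < n.+1) cc t i.
have e := paS t n.+1.
rewrite /cc !exprS.
have q : (n.+2%:R : R) = n.+1%:R + 1 by rewrite -addn1 natrD.
rewrite q in e *.
move: e; set P1 := pa t n.+1; set P2 := pa t n.+2; set s := (-1) ^+ n => e.
transitivity ((n.+1%:R + 1) * S - (n.+1%:R + 1) * s * P1 + s * (P2 * (n.+1%:R + 1))); first ring.
rewrite e; ring.
Qed.

Lemma Us_Ts (R : realType) (t : R) n : Us t n = Ts t n.
Proof.
suff : Us t n = Ts t n /\ Us t n.+1 = Ts t n.+1 by case.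
elim: n => [|n [IH1 IH2]].
  rewrite /Us /Ts /cc !big_ord_recr !big_ord0 /= /wt /= !pa0 !subn0.
  have e := paS (1 - t) 0; rewrite pa0 !mulr1 addr0 in e.
  have e' := paS t 0; rewrite pa0 !mulr1 addr0 in e'.
  rewrite e e'; split; ring.
split => //.
have h := Us_rec t n; rewrite IH1 IH2 -(Ts_rec t n) in h.
have nz : (n.+2%:R : R) != 0 by rewrite pnatr_eq0.
by apply: (mulfI nz).
Qed.

Definition Fp (R : realType) (t : R) n (x : R) : R := \sum_(j < n.+1) cc t j * x ^+ j.

Lemma Fp_derive (R : realType) (t : R) n (x : R) :
  is_derive x 1 (Fp t n) (\sum_(j < n.+1) cc t j * (j%:R * x ^+ j.-1)).
Proof.
have -> : Fp t n = \sum_(j < n.+1) (fun y => cc t j * y ^+ j).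
  by rewrite fct_sumE.
apply: is_derive_sum => j.
have hx : is_derive x 1 (fun y : R => y ^+ j) (j%:R * x ^+ j.-1).
  apply: DeriveDef; first exact: exprn_derivable.
  by rewrite exp_derive [LHS]mulr1.
have := is_deriveZ (cc t j) hx.
by [].
Qed.

Lemma ccS (R : realType) (t : R) j : cc t j.+1 * j.+1%:R = - ((t + j%:R) * cc t j).
Proof.
rewrite /cc exprS.
transitivity (-1 * (-1) ^+ j * (pa t j.+1 * j.+1%:R)); first ring.
rewrite paS; ring.
Qed.

Lemma Fp_ident (R : realType) (t : R) n (x : R) :
  (x + 1) * (\sum_(j < n.+1) cc t j * (j%:R * x ^+ j.-1)) + t * Fp t n x
  = (t + n%:R) * cc t n * x ^+ n.
Proof.
have h1 : x * (\sum_(j < n.+1) cc t j * (j%:R * x ^+ j.-1))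
          = \sum_(j < n.+1) cc t j * j%:R * x ^+ j.
  rewrite mulr_sumr; apply: eq_bigr => -[[|j] _] _ /=; first ring.
  rewrite exprS; ring.
have h2 : \sum_(j < n.+1) cc t j * (j%:R * x ^+ j.-1)
          = \sum_(j < n) - ((t + j%:R) * cc t j) * x ^+ j.
  rewrite big_ord_recl /= mulr0n mul0r mulr0 add0r.
  apply: eq_bigr => j _; rewrite /bump /= add1n /= -ccS; ring.
rewrite mulrDl mul1r h1 h2 /Fp mulr_sumr.
rewrite [X in X + _ = _]addrC -addrA -big_split /= big_ord_recr /=.
rewrite addrA -big_split /= big1 ?add0r; last by move=> j _; ring.
ring.
Qed.

Definition Kf (R : realType) (t : R) n (s : R) (x : R) : R :=
  (x + 1) `^ t * Fp t n x + s * x ^+ n.+1.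

Lemma Kf_derive (R : realType) (t : R) n s (x : R) : 0 < t -> -1 < x ->
  is_derive x 1 (Kf t n s)
    ((x + 1) `^ (t - 1) * ((t + n%:R) * cc t n * x ^+ n) + s * (n.+1%:R * x ^+ n)).
Proof.
move=> t0 hx.
have x1 : 0 < x + 1 by lra.
have hp : is_derive x 1 ((@powR R ^~ t) \o shift 1) (t * (x + 1) `^ (t - 1) * 1).
  apply: is_derive1_comp; last exact: is_derive_shift.
  exact: is_derive1_powR.
have hF := Fp_derive t n x.
have hX : is_derive x 1 (fun y : R => y ^+ n.+1) (n.+1%:R * x ^+ n).
  apply: DeriveDef; first exact: exprn_derivable.
  by rewrite exp_derive [LHS]mulr1.
have hM := is_deriveM hp hF.
have hS := is_deriveZ s hX.
have hD := is_deriveD hM hS.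
apply: (is_derive_eq hD).
rewrite /= -(Fp_ident t n x).
have e : (x + 1) `^ t = (x + 1) * (x + 1) `^ (t - 1).
  by rewrite mulr_powRB1 // ltW.
rewrite e /GRing.scale /=; ring.
Qed.

Lemma pa_ge0 (R : realType) (t : R) n : 0 <= t -> 0 <= pa t n.
Proof.
move=> t0; rewrite /pa divr_ge0 // prodr_ge0 // => i _.
by rewrite addr_ge0.
Qed.

Lemma dbound (R : realType) (t : R) n (x : R) : 0 < t < 1 -> 0 < x < 1 ->
  `|(x + 1) `^ (t - 1) * ((t + n%:R) * cc t n * x ^+ n)|
    <= pa t n.+1 * (n.+1%:R * x ^+ n).
Proof.
move=> /andP[t0 t1] /andP[x0 x1].
have y0 : 0 <= (x + 1) `^ (t - 1) by apply: powR_ge0.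
have y1 : (x + 1) `^ (t - 1) <= 1.
  rewrite -[leRHS](powRr0 (x + 1)); apply: ler_powR; lra.
rewrite [leRHS]mulrA paS.
have h : 0 <= (t + n%:R) * pa t n * x ^+ n.
  apply: mulr_ge0; last by apply: exprn_ge0; apply: ltW.
  apply: mulr_ge0; last by apply: pa_ge0; apply: ltW.
  by apply: addr_ge0 => //; apply: ltW.
set Q := (t + n%:R) * pa t n * x ^+ n in h *.
have -> : (t + n%:R) * cc t n * x ^+ n = (-1) ^+ n * Q by rewrite /Q /cc; ring.
rewrite normrM normrM normrX normrN normr1 expr1n mul1r (ger0_norm y0) (ger0_norm h).
by rewrite -[leRHS]mul1r ler_wpM2r.
Qed.



Lemma Kf0 (R : realType) (t : R) n s : Kf t n s 0 = 1.
Proof.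
rewrite /Kf /Fp add0r powR1 mul1r expr0n /= mulr0 addr0.
rewrite big_ord_recl /= expr0 mulr1 big1 ?addr0; last first.
  by move=> j _; rewrite expr0n /= mulr0.
by rewrite /cc expr0 mul1r pa0.
Qed.

Lemma Kf1 (R : realType) (t : R) n s : Kf t n s 1 = 2 `^ t * Ts t n + s.
Proof.
rewrite /Kf /Fp /Ts expr1n mulr1; congr (_ * _ + _).
by apply: eq_bigr => j _; rewrite expr1n mulr1.
Qed.

Lemma Kf_mono (R : realType) (t : R) n s : 0 < t < 1 ->
  (forall x, 0 < x < 1 ->
     0 <= (x + 1) `^ (t - 1) * ((t + n%:R) * cc t n * x ^+ n) + s * (n.+1%:R * x ^+ n)) ->
  Kf t n s 0 <= Kf t n s 1.
Proof.
move=> /andP[t0 t1] hpos.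
have der : forall x : R, -1 < x -> derivable (Kf t n s) x 1.
  by move=> x hx; have := Kf_derive n s t0 hx => -[].
apply: (@ger0_derive1_ndecr R (Kf t n s) 0 1) => //.
- by move=> x; rewrite in_itv /= => /andP[x0 x1]; apply: der; lra.
- move=> x; rewrite in_itv /= => hx.
  have hx' : -1 < x by move: hx => /andP[x0 _]; lra.
  rewrite derive1E (@derive_val _ _ _ _ _ _ _ (Kf_derive n s t0 hx')).
  exact: hpos.
- apply: derivable_within_continuous => x; rewrite in_itv /= => /andP[x0 _].
  by apply: der; lra.
Qed.

Lemma Kf_mono' (R : realType) (t : R) n s : 0 < t < 1 ->
  (forall x, 0 < x < 1 ->
     (x + 1) `^ (t - 1) * ((t + n%:R) * cc t n * x ^+ n) + s * (n.+1%:R * x ^+ n) <= 0) ->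
  Kf t n s 1 <= Kf t n s 0.
Proof.
move=> /andP[t0 t1] hpos.
have der : forall x : R, -1 < x -> derivable (Kf t n s) x 1.
  by move=> x hx; have := Kf_derive n s t0 hx => -[].
apply: (@ler0_derive1_nincr R (Kf t n s) 0 1) => //.
- by move=> x; rewrite in_itv /= => /andP[x0 x1]; apply: der; lra.
- move=> x; rewrite in_itv /= => hx.
  have hx' : -1 < x by move: hx => /andP[x0 _]; lra.
  rewrite derive1E (@derive_val _ _ _ _ _ _ _ (Kf_derive n s t0 hx')).
  exact: hpos.
- apply: derivable_within_continuous => x; rewrite in_itv /= => /andP[x0 _].
  by apply: der; lra.
Qed.

Lemma key_bound (R : realType) (t : R) n : 0 < t < 1 ->
  `|2 `^ t * Ts t n - 1| <= pa t n.+1.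
Proof.
move=> ht.
have hp := @Kf_mono R t n (pa t n.+1) ht.
have hm := @Kf_mono' R t n (- pa t n.+1) ht.
rewrite !Kf0 !Kf1 in hp hm.
have A : 1 <= 2 `^ t * Ts t n + pa t n.+1.
  apply: hp => x hx; have := @dbound R t n x ht hx.
  rewrite ler_norml => /andP[h1 h2]; lra.
have B : 2 `^ t * Ts t n - pa t n.+1 <= 1.
  apply: hm => x hx; have := @dbound R t n x ht hx.
  rewrite ler_norml => /andP[h1 h2]; lra.
rewrite ler_norml; apply/andP; split; lra.
Qed.

Lemma pa_bound (R : realType) (t : R) n : 0 <= t <= 1 ->
  pa t n * (1 + (1 - t) * \sum_(i < n) (i.+1%:R : R)^-1) <= 1.
Proof.
move=> /andP[t0 t1]; elim: n => [|n IH].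
  by rewrite pa0 big_ord0 mulr0 addr0 mulr1.
have d0 : (0 : R) < n.+1%:R by rewrite ltr0n.
set S := \sum_(i < n) (i.+1%:R : R)^-1 in IH.
rewrite big_ord_recr /= -/S.
set x := (1 - t) / n.+1%:R.
have x0 : 0 <= x by rewrite /x divr_ge0 // ?subr_ge0 // ltW.
have e : pa t n.+1 = pa t n * (1 - x).
  have := paS t n; rewrite /x => h.
  have nz : (n.+1%:R : R) != 0 by rewrite gt_eqF.
  apply: (mulIf nz); rewrite h.
  have q : (n.+1%:R : R) = n%:R + 1 by rewrite -addn1 natrD.
  rewrite q in nz *; field; by [].
have -> : 1 + (1 - t) * (S + n.+1%:R^-1) = (1 + (1 - t) * S) + x.
  by rewrite /x; ring.
rewrite e.
set A := 1 + (1 - t) * S in IH *.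
have A1 : 1 <= A.
  rewrite /A lerDl; apply: mulr_ge0; first by rewrite subr_ge0.
  by rewrite /S sumr_ge0 // => i _; rewrite invr_ge0 ler0n.
have P0 : 0 <= pa t n by apply: pa_ge0.
have h : 0 <= (pa t n * x) * (A - 1 + x).
  apply: mulr_ge0; first exact: mulr_ge0.
  by rewrite addr_ge0 // subr_ge0.
clearbody A x.
nra.
Qed.

Lemma harm_inf (R : realType) :
  (fun n => \sum_(i < n) (i.+1%:R : R)^-1) @ \oo --> +oo.
Proof.
have h : series (@harmonic R) @ \oo --> +oo.
  apply: nondecreasing_dvgn_lt; last exact: dvg_harmonic.
  apply: (@nondecreasing_series R harmonic xpredT 0) => k _ _.
  exact: harmonic_ge0.
suff -> : (fun n => \sum_(i < n) (i.+1%:R : R)^-1) = series (@harmonic R) by [].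
by apply/funext => n; rewrite /series /= big_mkord.
Qed.

Lemma pa_small (R : realType) (t : R) (e : R) : 0 < t < 1 -> 0 < e ->
  \forall n \near \oo, pa t n <= e.
Proof.
move=> /andP[t0 t1] e0.
have := @harm_inf R; move/cvgryPge => /(_ (((1 - t) * e)^-1)).
apply: filterS => n hn.
have hb := @pa_bound R t n ltac:(apply/andP; split; lra).
set H := \sum_(i < n) (i.+1%:R : R)^-1 in hn hb.
have P0 : 0 <= pa t n by apply: pa_ge0; lra.
have te : 0 < (1 - t) * e by rewrite mulr_gt0 // subr_gt0.
have B : 1 <= (1 - t) * H * e.
  have nz : (1 - t) * e != 0 by rewrite gt_eqF.
  have h := ler_wpM2l (ltW te) hn; rewrite mulfV // in h.
  by rewrite mulrAC.
set B' := (1 - t) * H in B hb.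
nra.
Qed.

Lemma pa_decr (R : realType) (t : R) n : 0 <= t <= 1 -> pa t n.+1 <= pa t n.
Proof.
move=> /andP[t0 t1].
have d0 : (0 : R) < n.+1%:R by rewrite ltr0n.
rewrite -(ler_pM2r d0) paS.
have q : (n.+1%:R : R) = n%:R + 1 by rewrite -addn1 natrD.
rewrite q; have P0 := pa_ge0 n t0.
nra.
Qed.

Unset Implicit Arguments.
Theorem mainTheorem12 (R : realType) (t : R) (ht : 0 < t < 1) :
  (fun n : nat => \sum_(k < n.+1) hBernstein 1 (n - k) k t) @ \oo
    --> (2 : R) `^ (- t).
Proof.
have -> : (fun n : nat => \sum_(k < n.+1) hBernstein 1 (n - k) k t) = Ts t.
  apply/funext => n; rewrite -Us_Ts /Us; apply: eq_bigr => k _.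
  by apply: hB_wt; rewrite -ltnS.
apply/cvgrPdist_le => e e0.
apply: filterS (pa_small ht e0) => n hn.
have t01 : 0 <= t <= 1 by move: ht => /andP[? ?]; apply/andP; split; lra.
have hk := key_bound n ht.
have hd := pa_decr n t01.
have p1 : 1 <= (2 : R) `^ t.
  rewrite -[leLHS](powRr0 2); apply: ler_powR; [lra | by case/andP: ht => /ltW].
have p0 : (0 : R) < 2 `^ t by lra.
have -> : (2 : R) `^ (- t) - Ts t n = (2 `^ t)^-1 * - (2 `^ t * Ts t n - 1).
  by rewrite powRN; field; rewrite gt_eqF.
have i0 : 0 <= (2 `^ t : R)^-1 by rewrite invr_ge0 ltW.
have i1 : (2 `^ t : R)^-1 <= 1 by rewrite invr_le1 // ?unitfE ?gt_eqF.
rewrite normrM normrN (ger0_norm i0).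
have hk0 : 0 <= `|2 `^ t * Ts t n - 1| by [].
set N := `|2 `^ t * Ts t n - 1| in hk hk0 *.
nra.
Qed.
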